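(* For each notion of guarding $\mathfrak{g}$ and $\sigma$-structures $\mathcal{A}, \mathcal{B}$, there is a bijective correspondence between (1) coKleisli morphisms, i.e. $\sigma$-homomorphisms, $\mathbb{G}^{\mathfrak{g}} \mathcal{A} \to \mathcal{B}$, and (2) winning strategies for Duplicator in the $\mathfrak{g}$-guarded simulation game from $\mathcal{A}$ to $\mathcal{B}$. Thus $\mathcal{A} \preceq^{\mathfrak{g}} \mathcal{B}$ iff there is a homomorphism $\mathbb{G}^{\mathfrak{g}} \mathcal{A} \to \mathcal{B}$.
   Context: A notion of guarding $\mathfrak{g}$ is atom, loose, or clique guarding; a subset of a $\sigma$-structure is $\mathfrak{g}$-guarded if contained in the support of a tuple satisfying a $\mathfrak{g}$-guard. $\mathbb{G}^{\mathfrak{g}}\mathcal{A}$ is the $\sigma$-structure whose universe consists of equivalence classes $[p,a]$ of focussed plays $\langle p,a\rangle$, where $p=[U_1,\ldots,U_n]$ is a non-empty list of $\mathfrak{g}$-guarded sets of $\mathcal{A}$ and $a \in U_n = \lambda(p)$; $\langle p,a\rangle \sim \langle q,a'\rangle$ iff $a=a'$, the greatest common prefix $p\sqcap q$ is non-empty, and $a$ lies in the last element of every play on the prefix-order paths from $p \sqcap q$ to $p$ and to $q$. Relations: $R^{\mathbb{G}\mathcal{A}} = \{([p,a_1],\ldots,[p,a_r]) \mid R^{\mathcal{A}}(a_1,\ldots,a_r)\}$. The $\mathfrak{g}$-guarded simulation game from $\mathcal{A}$ to $\mathcal{B}$: set $X_0 = \varnothing$, $\varphi_0 = \varnothing$;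 in round $n+1$ Spoiler picks a $\mathfrak{g}$-guarded set $X_{n+1}$ in $\mathcal{A}$, and Duplicator must respond with a $\mathfrak{g}$-guarded set $Y_{n+1}$ in $\mathcal{B}$ and a partial homomorphism $\varphi_{n+1} : X_{n+1} \to Y_{n+1}$ agreeing with $\varphi_n$ on $X_{n+1}\cap X_n$. Duplicator wins if he can always respond. $\mathcal{A} \preceq^{\mathfrak{g}} \mathcal{B}$ means Duplicator has a winning strategy. *)

(* Defs.v *)
From Stdlib Require Import List.
Import ListNotations.
Set Implicit Arguments.

Record signature := Signature { sym : Type; ar : sym -> nat }.

Record structure (S : signature) := Structure {
  carrier :> Type;
  rel : sym S -> list carrier -> Prop;
  rel_ar : forall s t, rel s t -> length t = ar S s }.
Arguments rel {S} _ _ _.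

Definition hom (S : signature) (M N : structure S) : Type :=
  { f : M -> N | forall s t, rel M s t -> rel N s (map f t) }.

Inductive guarding := AtomG | LooseG | CliqueG.

(* a tuple satisfying an atom (a relation atom, or an equality atom x = x) *)
Definition atom_tuple (S : signature) (M : structure S) (t : list M) : Prop :=
  (exists s, rel M s t) \/ (exists a, t = [a; a]).

Definition pairs_covered (T : Type) (a : list T) (ts : list (list T)) : Prop :=
  forall x y, In x a -> In y a -> exists t, In t ts /\ In x t /\ In y t.

Definition sat_guard (S : signature) (M : structure S) (g : guarding)
    (a : list M) : Prop :=
  match g with
  | AtomG => atom_tuple M a
  | LooseG => exists ts : list (list M),
      Forall (atom_tuple M) ts /\ Forall (fun t => incl t a) ts /\
      pairs_covered a ts
  | CliqueG => exists (b : list M) (ts : list (list M)),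
      Forall (atom_tuple M) ts /\ Forall (fun t => incl t (a ++ b)) ts /\
      pairs_covered a ts
  end.

Definition guarded (S : signature) (M : structure S) (g : guarding)
    (X : M -> Prop) : Prop :=
  exists a : list M, sat_guard M g a /\ forall x, X x -> In x a.

Definition is_play (S : signature) (g : guarding) (A : structure S)
    (p : list (A -> Prop)) : Prop :=
  p <> [] /\ Forall (guarded A g) p.

Definition lastset (T : Type) (p : list (T -> Prop)) : T -> Prop :=
  last p (fun _ => False).

Record fplay (S : signature) (g : guarding) (A : structure S) := FPlay {
  fp_play : list (A -> Prop);
  fp_pt : A;
  fp_isplay : is_play g A fp_play;
  fp_foc : lastset fp_play fp_pt }.

Definition prefix (T : Type) (r s : list T) : Prop := exists u, s = r ++ u.

Definition is_gcp (T : Type) (r p q : list T) : Prop :=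
  prefix r p /\ prefix r q /\
  forall r', prefix r' p -> prefix r' q -> prefix r' r.

Definition fequiv (S : signature) (g : guarding) (A : structure S)
    (x y : fplay g A) : Prop :=
  fp_pt x = fp_pt y /\
  exists r, is_gcp r (fp_play x) (fp_play y) /\ r <> [] /\
    (forall s, prefix r s -> prefix s (fp_play x) -> lastset s (fp_pt x)) /\
    (forall s, prefix r s -> prefix s (fp_play y) -> lastset s (fp_pt x)).

Definition GU (S : signature) (g : guarding) (A : structure S) : Type :=
  { C : fplay g A -> Prop | exists x, C = fequiv x }.

Definition cls (S : signature) (g : guarding) (A : structure S)
    (x : fplay g A) : GU g A :=
  exist _ (fequiv x) (ex_intro _ x eq_refl).

Definition Grel (S : signature) (g : guarding) (A : structure S)
    (s : sym S) (t : list (GU g A)) : Prop :=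
  exists (p : list (A -> Prop)) (xs : list (fplay g A)),
    Forall (fun x => fp_play x = p) xs /\ rel A s (map (@fp_pt _ _ _) xs) /\
    t = map (@cls _ _ _) xs.

Lemma Grel_ar (S : signature) (g : guarding) (A : structure S) :
  forall s t, @Grel S g A s t -> length t = ar S s.
Proof.
  intros s t [p [xs [_ [H E]]]]. subst t.
  apply rel_ar in H. rewrite length_map in *. exact H.
Qed.

Definition Gcom (S : signature) (g : guarding) (A : structure S) : structure S :=
  @Structure S (GU g A) (@Grel S g A) (@Grel_ar S g A).

Definition play (S : signature) (g : guarding) (A : structure S) : Type :=
  { p : list (A -> Prop) | is_play g A p }.

(* A (deterministic) Duplicator strategy: after Spoiler's moves
   p = [X_1,...,X_n], a map phi_n : X_n -> B. *)
Definition dstrategy (S : signature) (g : guarding) (A B : structure S) : Type :=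
  forall p : play g A, { a : A | lastset (proj1_sig p) a } -> B.

Definition winning (S : signature) (g : guarding) (A B : structure S)
    (st : dstrategy g A B) : Prop :=
  (forall p : play g A,
     (exists Y : B -> Prop, guarded B g Y /\ forall a, Y (st p a)) /\
     (forall s (t : list { a : A | lastset (proj1_sig p) a }),
        rel A s (map (@proj1_sig _ _) t) -> rel B s (map (st p) t))) /\
  (forall (p p' : play g A) (X : A -> Prop) (a : A)
          (h : lastset (proj1_sig p) a) (h' : lastset (proj1_sig p') a),
     proj1_sig p' = proj1_sig p ++ [X] ->
     st p' (exist _ a h') = st p (exist _ a h)).

Definition simulates (S : signature) (g : guarding) (A B : structure S) : Prop :=
  exists st : dstrategy g A B, winning st.

(* Main.v *)
Require Import Defs.
From Stdlib Require Import List Classical ClassicalEpsilon FunctionalExtensionality PropExtensionality ProofIrrelevance.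
Import ListNotations.

Lemma sig_eq {U} (P : U -> Prop) (x y : U) (p : P x) (q : P y) :
  x = y -> exist P x p = exist P y q.
Proof. intros ->. f_equal. apply proof_irrelevance. Qed.

Section Pref.
Context {T : Type}.
Lemma prefix_refl (l : list T) : prefix l l.
Proof. exists []. now rewrite app_nil_r. Qed.
Lemma prefix_trans (a b c : list T) : prefix a b -> prefix b c -> prefix a c.
Proof. intros [u ->] [v ->]. exists (u ++ v). now rewrite app_assoc. Qed.
Lemma prefix_nil (l : list T) : prefix [] l.
Proof. now exists l. Qed.
Lemma prefix_app_l (r u : list T) : prefix r (r ++ u).
Proof. now exists u. Qed.
Lemma prefix_of_nil (r : list T) : prefix r [] -> r = [].
Proof. intros [u E]. symmetry in E. now apply app_eq_nil in E. Qed.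
Lemma prefix_cons_inv z x (r p : list T) : prefix (z :: r) (x :: p) -> z = x /\ prefix r p.
Proof. intros [u E]. simpl in E. injection E as -> ->. split; auto. now exists u. Qed.
Lemma prefix_cons x (r p : list T) : prefix r p -> prefix (x :: r) (x :: p).
Proof. intros [u ->]. now exists u. Qed.
Lemma prefix_comparable (r r' s : list T) :
  prefix r s -> prefix r' s -> prefix r r' \/ prefix r' r.
Proof.
  revert r' s. induction r as [|x r IH]; intros r' s H1 H2.
  - left. apply prefix_nil.
  - destruct r' as [|y r']. right. apply prefix_nil.
    destruct s as [|z s]. apply prefix_of_nil in H1. discriminate.
    apply prefix_cons_inv in H1 as [-> H1]. apply prefix_cons_inv in H2 as [-> H2].
    destruct (IH _ _ H1 H2); [left|right]; now apply prefix_cons.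
Qed.
Lemma prefix_nonnil (r s : list T) : prefix r s -> r <> [] -> s <> [].
Proof. intros [u ->] H E. apply app_eq_nil in E. tauto. Qed.
Lemma prefix_self (p s : list T) : prefix p s -> prefix s p -> s = p.
Proof.
  intros [u ->] [v E]. rewrite <- app_assoc in E.
  assert (p ++ [] = p ++ (u ++ v)) by now rewrite app_nil_r.
  apply app_inv_head in H. symmetry in H. apply app_eq_nil in H as [-> _].
  now rewrite app_nil_r.
Qed.
Lemma prefix_snoc (p s : list T) z :
  prefix p s -> prefix s (p ++ [z]) -> s = p \/ s = p ++ [z].
Proof.
  intros [u ->] [v E]. rewrite <- app_assoc in E. apply app_inv_head in E.
  destruct u as [|y u]. left. now rewrite app_nil_r.
  simpl in E. injection E as -> E. symmetry in E. apply app_eq_nil in E as [-> _].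
  now right.
Qed.

Fixpoint gcpf (p q : list T) : list T :=
  match p, q with
  | x :: p', y :: q' =>
      if excluded_middle_informative (x = y) then x :: gcpf p' q' else []
  | _, _ => []
  end.
Lemma gcpf_spec (p q : list T) : is_gcp (gcpf p q) p q.
Proof.
  revert q. induction p as [|x p IH]; intros q.
  - split; [apply prefix_nil|split; [apply prefix_nil|]].
    intros r' H _. apply prefix_of_nil in H. subst. apply prefix_nil.
  - destruct q as [|y q].
    + split; [apply prefix_nil|split; [apply prefix_nil|]].
      intros r' _ H. apply prefix_of_nil in H. subst. apply prefix_nil.
    + simpl. destruct (excluded_middle_informative (x = y)) as [<-|ne].
      * destruct (IH q) as [h1 [h2 h3]].
        split; [now apply prefix_cons|split; [now apply prefix_cons|]].
        intros [|z r'] H1 H2. apply prefix_nil.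
        apply prefix_cons_inv in H1 as [-> H1]. apply prefix_cons_inv in H2 as [_ H2].
        apply prefix_cons. auto.
      * split; [apply prefix_nil|split; [apply prefix_nil|]].
        intros [|z r'] H1 H2. apply prefix_nil.
        apply prefix_cons_inv in H1 as [-> _]. apply prefix_cons_inv in H2 as [E _].
        contradiction.
Qed.
End Pref.

Fixpoint lsig {T} (P : T -> Prop) (l : list T) : Forall P l -> list {x | P x} :=
  match l return Forall P l -> list {x | P x} with
  | [] => fun _ => []
  | x :: l' => fun H => exist P x (Forall_inv H) :: lsig P l' (Forall_inv_tail H)
  end.
Lemma lsig_proj {T} (P : T -> Prop) l H : map (@proj1_sig _ _) (lsig P l H) = l.
Proof. induction l; simpl; f_equal; auto. Qed.
Lemma lsig_map {T U} (P : T -> Prop) (k : T -> U) l H :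
  map (fun y => k (proj1_sig y)) (lsig P l H) = map k l.
Proof. induction l; simpl; f_equal; auto. Qed.

Lemma lastset_snoc {T} (p : list (T -> Prop)) Z : lastset (p ++ [Z]) = Z.
Proof. unfold lastset. apply last_last. Qed.

Lemma Forall_last {T} (P : T -> Prop) l d : l <> [] -> Forall P l -> P (last l d).
Proof.
  intros ne H. destruct (exists_last ne) as [l' [x ->]]. rewrite last_last.
  apply Forall_app in H as [_ H]. now inversion H.
Qed.

Section Eqv.
Context {S : signature} {g : guarding} {A : structure S}.

Lemma play_prefix (r q : list (A -> Prop)) :
  is_play g A q -> prefix r q -> r <> [] -> is_play g A r.
Proof. intros [_ H] [u ->] ne. split; auto. now apply Forall_app in H. Qed.

Lemma fequiv_refl (x : fplay g A) : fequiv x x.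
Proof.
  split; auto. exists (fp_play x). split; [|split].
  - split; [apply prefix_refl|split; [apply prefix_refl|auto]].
  - apply (fp_isplay x).
  - split; intros s H1 H2; rewrite (prefix_self _ _ H1 H2); apply fp_foc.
Qed.

Lemma fequiv_sym (x y : fplay g A) : fequiv x y -> fequiv y x.
Proof.
  intros [e [r [[h1 [h2 h3]] [hn [c1 c2]]]]]. split; auto.
  exists r. split; [split; [auto|split; [auto|]]|split; [auto|]].
  - intros r' a b. auto.
  - rewrite <- e. split; auto.
Qed.

Lemma fequiv_trans (x y z : fplay g A) : fequiv x y -> fequiv y z -> fequiv x z.
Proof.
  intros [e1 [r1 [[a1 [b1 m1]] [n1 [c1 d1]]]]] [e2 [r2 [[a2 [b2 m2]] [n2 [c2 d2]]]]].
  split; [congruence|].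
  pose proof (gcpf_spec (fp_play x) (fp_play z)) as G.
  set (r3 := gcpf (fp_play x) (fp_play z)) in *. destruct G as [a3 [b3 m3]].
  exists r3. split; [split; auto|].
  destruct (prefix_comparable _ _ _ b1 a2) as [P|P].
  - assert (Q : prefix r1 r3) by (apply m3; auto; eapply prefix_trans; eauto).
    split; [intro E; subst r3; rewrite E in Q; apply prefix_of_nil in Q; auto|].
    split.
    + intros s H1 H2. apply c1; auto. eapply prefix_trans; eauto.
    + intros s H1 H2. destruct (prefix_comparable _ _ _ b2 H2) as [R|R].
      * rewrite e1. apply d2; auto.
      * apply d1; [eapply prefix_trans; [exact Q|exact H1]|eapply prefix_trans; eauto].
  - assert (Q : prefix r2 r3) by (apply m3; auto; eapply prefix_trans; eauto).
    split; [intro E; subst r3; rewrite E in Q; apply prefix_of_nil in Q; auto|].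
    split.
    + intros s H1 H2. destruct (prefix_comparable _ _ _ a1 H2) as [R|R].
      * apply c1; auto.
      * rewrite e1. apply c2; [eapply prefix_trans; [exact Q|exact H1]|eapply prefix_trans; eauto].
    + intros s H1 H2. rewrite e1. apply d2; auto. eapply prefix_trans; eauto.
Qed.

Lemma cls_eq (x y : fplay g A) : fequiv x y -> cls x = cls y.
Proof.
  intro H. unfold cls. apply sig_eq. apply functional_extensionality. intro z.
  apply propositional_extensionality. split; intro K.
  - eapply fequiv_trans; [apply fequiv_sym; exact H|exact K].
  - eapply fequiv_trans; eauto.
Qed.

Lemma fplay_irr p a H1 H2 H1' H2' : @FPlay S g A p a H1 H2 = @FPlay S g A p a H1' H2'.
Proof. f_equal; apply proof_irrelevance. Qed.

Lemma cls_step (p : list (A -> Prop)) Z a Hp Hp' Ha Ha' :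
  cls (@FPlay S g A p a Hp Ha) = cls (@FPlay S g A (p ++ [Z]) a Hp' Ha').
Proof.
  apply cls_eq. split; [reflexivity|]. exists p. simpl.
  split; [split; [apply prefix_refl|split; [apply prefix_app_l|auto]]|].
  split; [apply Hp|]. split.
  - intros s H1 H2. rewrite (prefix_self _ _ H1 H2). exact Ha.
  - intros s H1 H2. destruct (prefix_snoc _ _ _ H1 H2) as [->| ->]; auto.
Qed.
End Eqv.

Lemma atom_sat {S} (M : structure S) g t : atom_tuple M t -> sat_guard M g t.
Proof.
  intro H. destruct g; simpl.
  - exact H.
  - exists [t]. split; [constructor; auto|split; [constructor; [apply incl_refl|constructor]|]].
    intros x y hx hy. exists t. simpl; auto.
  - exists [], [t]. split; [constructor; auto|split; [constructor; [rewrite app_nil_r; apply incl_refl|constructor]|]].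
    intros x y hx hy. exists t. simpl; auto.
Qed.

Section Transfer.
Context {S : signature} (M N : structure S) (f : M -> N) (a : list M).
Hypothesis Hat : forall t, atom_tuple M t -> exists gt : M -> N,
  atom_tuple N (map gt t) /\ forall x, In x t -> In x a -> gt x = f x.

Lemma transfer_ts ts : Forall (atom_tuple M) ts -> exists ts',
  Forall (atom_tuple N) ts' /\
  (forall t, In t ts -> exists gt, In (map gt t) ts' /\ forall x, In x t -> In x a -> gt x = f x) /\
  (forall t', In t' ts' -> exists t gt, In t ts /\ t' = map gt t /\ forall x, In x t -> In x a -> gt x = f x).
Proof.
  induction ts as [|t ts IH]; intro H.
  - exists []. split; [constructor|split; intros ? []].
  - inversion H as [|? ? H1 H2]; subst. destruct (IH H2) as [ts' [A1 [A2 A3]]].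
    destruct (Hat t H1) as [gt [G1 G2]].
    exists (map gt t :: ts'). split; [constructor; auto|split].
    + intros t0 [<-|T0]. exists gt. simpl; auto.
      destruct (A2 t0 T0) as [g0 [X1 X2]]. exists g0. simpl; auto.
    + intros t' [<-|T0]. exists t, gt. simpl; auto.
      destruct (A3 t' T0) as [t1 [g1 [X1 X2]]]. exists t1, g1. simpl; auto.
Qed.

Lemma transfer g : sat_guard M g a -> sat_guard N g (map f a).
Proof.
  destruct g; simpl.
  - intro H. destruct (Hat a H) as [gt [G1 G2]].
    rewrite (map_ext_in f gt); auto. intros x hx. symmetry. auto.
  - intros [ts [F1 [F2 F3]]]. destruct (transfer_ts ts F1) as [ts' [A1 [A2 A3]]].
    exists ts'. split; auto. split.
    + apply Forall_forall. intros t' T'. destruct (A3 t' T') as [t [gt [X1 [-> X2]]]].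
      rewrite Forall_forall in F2. specialize (F2 t X1).
      rewrite (map_ext_in gt f); auto. apply incl_map; auto.
    + intros x' y' hx hy. apply in_map_iff in hx as [x [<- hx]]. apply in_map_iff in hy as [y [<- hy]].
      destruct (F3 x y hx hy) as [t [T1 [T2 T3]]]. destruct (A2 t T1) as [gt [X1 X2]].
      exists (map gt t). split; auto. rewrite <- (X2 x), <- (X2 y); auto. split; apply in_map; auto.
  - intros [b [ts [F1 [F2 F3]]]]. destruct (transfer_ts ts F1) as [ts' [A1 [A2 A3]]].
    exists (concat ts'), ts'. split; auto. split.
    + apply Forall_forall. intros t' T'. apply incl_appr. intros z hz. apply in_concat. eauto.
    + intros x' y' hx hy. apply in_map_iff in hx as [x [<- hx]]. apply in_map_iff in hy as [y [<- hy]].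
      destruct (F3 x y hx hy) as [t [T1 [T2 T3]]]. destruct (A2 t T1) as [gt [X1 X2]].
      exists (map gt t). split; auto. rewrite <- (X2 x), <- (X2 y); auto. split; apply in_map; auto.
Qed.
End Transfer.

Section Main.
Context {S : signature} {g : guarding} {A B : structure S}.

Definition stv (st : dstrategy g A B) (p : list (A -> Prop)) (Hp : is_play g A p)
  (a : A) (Ha : lastset p a) : B := st (exist _ p Hp) (exist _ a Ha).

Lemma stv_irr st p q Hp Hq a b Ha Hb : p = q -> a = b -> stv st p Hp a Ha = stv st q Hq b Hb.
Proof. intros -> ->. unfold stv. rewrite (proof_irrelevance _ Hp Hq), (proof_irrelevance _ Ha Hb). reflexivity. Qed.

Lemma st_path st (W : winning st) r u (Hr : is_play g A r) (Hq : is_play g A (r ++ u)) a Ha Hb :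
  (forall s, prefix r s -> prefix s (r ++ u) -> lastset s a) ->
  stv st r Hr a Ha = stv st (r ++ u) Hq a Hb.
Proof.
  revert Hq Hb. induction u as [|X u IH] using rev_ind; intros Hq Hb C.
  - apply stv_irr; auto. now rewrite app_nil_r.
  - assert (Hq' : is_play g A (r ++ u)).
    { eapply play_prefix; [exact Hq| |]. rewrite app_assoc. apply prefix_app_l.
      apply (prefix_nonnil r). apply prefix_app_l. apply Hr. }
    assert (Hb' : lastset (r ++ u) a).
    { apply C. apply prefix_app_l. rewrite app_assoc. apply prefix_app_l. }
    rewrite (IH Hq' Hb').
    2:{ intros s H1 H2. apply C; auto. eapply prefix_trans; [exact H2|]. rewrite app_assoc. apply prefix_app_l. }
    unfold stv. symmetry.
    apply (proj2 W (exist _ (r ++ u) Hq') (exist _ (r ++ (u ++ [X])) Hq) X a Hb' Hb).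
    simpl. now rewrite app_assoc.
Qed.

Lemma st_welldef st (W : winning st) (x y : fplay g A) : fequiv x y ->
  stv st (fp_play x) (fp_isplay x) (fp_pt x) (fp_foc x) =
  stv st (fp_play y) (fp_isplay y) (fp_pt y) (fp_foc y).
Proof.
  intros [e [r [[[u1 E1] [[u2 E2] _]] [hn [c1 c2]]]]].
  assert (Hr : is_play g A r).
  { eapply play_prefix; [apply (fp_isplay x)|exists u1; exact E1|exact hn]. }
  assert (Ha : lastset r (fp_pt x)) by (apply c1; [apply prefix_refl|exists u1; auto]).
  assert (Q1 : is_play g A (r ++ u1)) by (rewrite <- E1; apply fp_isplay).
  assert (B1 : lastset (r ++ u1) (fp_pt x)) by (rewrite <- E1; apply fp_foc).
  assert (Q2 : is_play g A (r ++ u2)) by (rewrite <- E2; apply fp_isplay).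
  assert (B2 : lastset (r ++ u2) (fp_pt x)) by (rewrite <- E2, e; apply fp_foc).
  transitivity (stv st (r ++ u1) Q1 (fp_pt x) B1). apply stv_irr; auto.
  rewrite <- (st_path st W r u1 Hr Q1 _ Ha B1).
  2:{ intros s H1 H2. apply c1; auto. now rewrite E1. }
  rewrite (st_path st W r u2 Hr Q2 _ Ha B2).
  2:{ intros s H1 H2. apply c2; auto. now rewrite E2. }
  apply stv_irr; auto.
Qed.

Definition Fst (h : hom (Gcom g A) B) : dstrategy g A B :=
  fun p a => proj1_sig h (cls (@FPlay S g A (proj1_sig p) (proj1_sig a) (proj2_sig p) (proj2_sig a))).

Lemma Fst_win (h : hom (Gcom g A) B) : winning (Fst h).
Proof.
  destruct h as [hf hh]. split.
  - intros [p Hp]. split.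
    + exists (fun z => exists x (hx : lastset p x), z = hf (cls (@FPlay S g A p x Hp hx))).
      split.
      2:{ intros [x hx]. exists x, hx. reflexivity. }
      assert (GX : guarded A g (lastset p)) by (unfold lastset; apply (Forall_last (guarded A g) p); apply Hp).
      destruct GX as [a [Hsat Hsub]].
      destruct a as [|y0 a1] eqn:Ea.
      * exists []. split.
        2:{ intros z [x [hx _]]. apply Hsub in hx. destruct hx. }
        destruct g; simpl in Hsat |- *.
        -- destruct Hsat as [[s Hs]|[x E]]; [|discriminate].
           left. exists s. apply (hh s []). exists p, []. simpl. auto.
        -- exists []. split; [constructor|split; [constructor|intros x y []]].
        -- exists [], []. split; [constructor|split; [constructor|intros x y []]].
      * rewrite <- Ea in *.
        set (P1 := p ++ [fun y => In y a]).
        assert (HP1 : is_play g A P1).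
        { split. unfold P1. intro E. apply app_eq_nil in E. destruct E; discriminate.
          apply Forall_app. split. apply Hp. constructor; [|constructor].
          exists a. split; auto. }
        assert (H0 : lastset P1 y0) by (unfold P1; rewrite lastset_snoc; rewrite Ea; left; auto).
        set (b0 := hf (cls (@FPlay S g A P1 y0 HP1 H0))).
        set (Ftot := fun P (HP : is_play g A P) y =>
          match excluded_middle_informative (lastset P y) with
          | left H => hf (cls (@FPlay S g A P y HP H))
          | right _ => b0 end).
        assert (Ftot_eq : forall P HP y H, Ftot P HP y = hf (cls (@FPlay S g A P y HP H))).
        { intros P HP y H. unfold Ftot. destruct (excluded_middle_informative _); [|contradiction].
          do 2 f_equal. apply fplay_irr. }
        set (f := Ftot P1 HP1).
        exists (map f a). split.
        2:{ intros z [x [hx ->]]. apply in_map_iff. exists x. split; [|now apply Hsub].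
            assert (hx1 : lastset P1 x) by (unfold P1; rewrite lastset_snoc; now apply Hsub).
            unfold f. rewrite (Ftot_eq _ _ _ hx1). unfold P1. f_equal. symmetry. apply cls_step. }
        apply transfer; auto.
        intros t Ht.
        set (P2 := P1 ++ [fun y => In y t]).
        assert (HP2 : is_play g A P2).
        { split. unfold P2. intro E. apply app_eq_nil in E. destruct E; discriminate.
          apply Forall_app. split. apply HP1. constructor; [|constructor].
          exists t. split; auto. apply atom_sat; auto. }
        exists (Ftot P2 HP2). split.
        -- destruct Ht as [[s Hs]|[x ->]].
           ++ left. exists s.
              assert (HF : Forall (lastset P2) t).
              { unfold P2. rewrite lastset_snoc. apply Forall_forall. auto. }
              set (xs := map (fun y : {y | lastset P2 y} => @FPlay S g A P2 (proj1_sig y) HP2 (proj2_sig y)) (lsig _ t HF)).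
              assert (E : map (Ftot P2 HP2) t = map hf (map (@cls _ _ _) xs)).
              { rewrite <- (lsig_map _ _ _ HF). unfold xs. rewrite !map_map.
                apply map_ext. intros [y hy]. simpl. apply Ftot_eq. }
              rewrite E. apply (hh s). exists P2, xs. split; [|split; auto].
              ** apply Forall_forall. intros x hx. unfold xs in hx. apply in_map_iff in hx as [? [<- _]]. reflexivity.
              ** unfold xs. rewrite map_map. simpl. rewrite (lsig_map _ (fun y => y)). now rewrite map_id.
           ++ right. exists (Ftot P2 HP2 x). reflexivity.
        -- intros x hxt hxa.
           assert (hx1 : lastset P1 x) by (unfold P1; rewrite lastset_snoc; auto).
           assert (hx2 : lastset P2 x) by (unfold P2; rewrite lastset_snoc; auto).
           unfold f. rewrite (Ftot_eq _ _ _ hx1), (Ftot_eq _ _ _ hx2). unfold P2.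
           f_equal. symmetry. apply cls_step.
    + intros s t Hr. unfold Fst. simpl.
      set (xs := map (fun y : {y | lastset p y} => @FPlay S g A p (proj1_sig y) Hp (proj2_sig y)) t).
      assert (E : map (fun a => hf (cls (@FPlay S g A p (proj1_sig a) Hp (proj2_sig a)))) t = map hf (map (@cls _ _ _) xs)).
      { unfold xs. now rewrite !map_map. }
      enough (R : rel B s (map hf (map (@cls _ _ _) xs))) by (rewrite <- E in R; exact R). apply (hh s). exists p, xs. split; [|split; auto].
      * apply Forall_forall. intros x hx. unfold xs in hx. apply in_map_iff in hx as [? [<- _]]. reflexivity.
      * unfold xs. now rewrite map_map.
  - intros [p Hp] [p' Hp'] X a h h' E. simpl in E. subst p'. unfold Fst. simpl.
    f_equal. symmetry. apply cls_step.
Qed.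

Definition Hrep (st : dstrategy g A B) : GU g A -> B := fun C =>
  let x := proj1_sig (constructive_indefinite_description _ (proj2_sig C)) in
  stv st (fp_play x) (fp_isplay x) (fp_pt x) (fp_foc x).

Lemma Hrep_cls st (W : winning st) x :
  Hrep st (cls x) = stv st (fp_play x) (fp_isplay x) (fp_pt x) (fp_foc x).
Proof.
  unfold Hrep. destruct (constructive_indefinite_description _ _) as [x' e]. simpl in *.
  symmetry. apply st_welldef; auto. rewrite e. apply fequiv_refl.
Qed.

Lemma map_lsig_st st (W : winning st) (P : play g A) xs
  (HF : Forall (lastset (proj1_sig P)) (map (@fp_pt _ _ _) xs)) :
  Forall (fun x => fp_play x = proj1_sig P) xs ->
  map (st P) (lsig _ _ HF) = map (fun x => Hrep st (cls x)) xs.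
Proof.
  induction xs as [|x xs IH]; intro H; simpl; auto.
  f_equal.
  - rewrite Hrep_cls; auto. destruct P as [p Hp].
    change (stv st p Hp (fp_pt x) (Forall_inv HF) = stv st (fp_play x) (fp_isplay x) (fp_pt x) (fp_foc x)).
    apply stv_irr; auto. symmetry. exact (Forall_inv H).
  - apply IH. exact (Forall_inv_tail H).
Qed.

Lemma Hrep_hom st (W : winning st) :
  forall s t, rel (Gcom g A) s t -> rel B s (map (Hrep st) t).
Proof.
  intros s t [p [xs [Hf [Hr ->]]]]. rewrite map_map.
  destruct xs as [|x0 xs'].
  - simpl in *.
    assert (H0 : is_play g A [fun _ => False]).
    { split. discriminate. constructor; [|constructor].
      exists []. split; [|intros _ []].
      destruct g; simpl.
      - left. exists s. exact Hr.
      - exists []. split; [constructor|split; [constructor|intros x y []]].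
      - exists [], []. split; [constructor|split; [constructor|intros x y []]]. }
    exact (proj2 (proj1 W (exist _ _ H0)) s [] Hr).
  - set (P := exist (is_play g A) (fp_play x0) (fp_isplay x0)).
    assert (Ep : p = fp_play x0) by (symmetry; exact (Forall_inv Hf)). subst p.
    assert (HF : Forall (lastset (proj1_sig P)) (map (@fp_pt _ _ _) (x0 :: xs'))).
    { apply Forall_forall. intros a ha. apply in_map_iff in ha as [x [<- hx]].
      rewrite Forall_forall in Hf. simpl. rewrite <- (Hf x hx). apply fp_foc. }
    rewrite <- (map_lsig_st st W P _ HF Hf).
    apply (proj2 (proj1 W P)). now rewrite lsig_proj.
Qed.

End Main.

Theorem theorem3p7 (S : signature) (g : guarding) (A B : structure S) :
  (exists F : hom (Gcom g A) B -> { st : dstrategy g A B | winning st },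
     (exists F' : { st : dstrategy g A B | winning st } -> hom (Gcom g A) B,
        (forall h, F' (F h) = h) /\ (forall w, F (F' w) = w)) /\
     (forall (h : hom (Gcom g A) B) (p : play g A) (a : A)
             (ha : lastset (proj1_sig p) a),
        proj1_sig (F h) p (exist _ a ha) =
        proj1_sig h (cls (@FPlay S g A (proj1_sig p) a (proj2_sig p) ha)))) /\
  (simulates g A B <-> inhabited (hom (Gcom g A) B)).
Proof.
  set (F := fun h : hom (Gcom g A) B => exist (@winning S g A B) (Fst h) (Fst_win h)).
  set (F' := fun w : { st : dstrategy g A B | winning st } =>
     exist (fun f : Gcom g A -> B => forall s t, rel (Gcom g A) s t -> rel B s (map f t))
       (Hrep (proj1_sig w)) (Hrep_hom (proj1_sig w) (proj2_sig w)) : hom (Gcom g A) B).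
  split; [exists F; split; [exists F'; split|]|].
  - intros [hf hh]. unfold F, F'. simpl. apply sig_eq.
    apply functional_extensionality. intros [C [x ->]].
    assert (Ec : exist (fun C => exists y, C = fequiv y) (fequiv x) (ex_intro _ x eq_refl) = cls x) by reflexivity.
    replace (exist (fun C => exists y, C = fequiv y) (fequiv x) _) with (cls x) by (apply sig_eq; reflexivity).
    rewrite (Hrep_cls _ (Fst_win (exist _ hf hh))). destruct x. reflexivity.
  - intros [st W]. unfold F, F'. simpl. apply sig_eq.
    unfold dstrategy; apply functional_extensionality_dep. intros [p Hp]. apply functional_extensionality. intros [a Ha].
    unfold Fst. simpl. rewrite (Hrep_cls _ W). reflexivity.
  - intros. reflexivity.
  - split.
    + intros [st W]. constructor. exact (F' (exist _ st W)).
    + intros [h]. exists (Fst h). apply Fst_win.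
Qed.
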